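(* Let $q$ be a power of $2$. For $i=1,\dots,k$, let $b_i\in\mathbb{F}_q^*$, let $\delta\in\mathbb{F}_{q^2}$, and let $s_i$ be positive integers with $s_iq\equiv s_i\pmod{q^2-1}$. Then the polynomial $$P(x)=\sum_{i=1}^k b_i(x^q+x+\delta)^{s_i}+x$$ is an involution over $\mathbb{F}_{q^2}$.
   Context: A polynomial $P$ is an involution over $\mathbb{F}_{q^2}$ if it is a permutation polynomial of $\mathbb{F}_{q^2}$ equal to its own compositional inverse, i.e. $P(P(c))=c$ for all $c\in\mathbb{F}_{q^2}$. *)

(* Defs.v *)
From mathcomp Require Import all_boot all_order all_algebra all_field.
Set Implicit Arguments. Unset Strict Implicit. Unset Printing Implicit Defensive.
Import GRing.Theory.
Local Open Scope ring_scope.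

Definition is_involution_poly (F : finFieldType) (P : {poly F}) : Prop :=
  bijective (fun c : F => P.[c]) /\ forall c : F, P.[P.[c]] = c.

Definition inv_poly (F : finFieldType) (q k : nat) (b : 'I_k -> F)
    (s : 'I_k -> nat) (delta : F) : {poly F} :=
  \sum_(i < k) b i *: ('X^q + 'X + delta%:P) ^+ s i + 'X.

(* Main.v *)
Require Import Defs.
From mathcomp Require Import all_boot all_order all_algebra all_field.
Local Open Scope ring_scope.
Import GRing.Theory.

Theorem theorem3p1 (F : finFieldType) (m : nat) (q : nat)
    (hq : q = (2 ^ m)%N) (hF : #|F| = (q ^ 2)%N)
    (k : nat) (b : 'I_k -> F) (s : 'I_k -> nat) (delta : F)
    (hb : forall i, b i != 0 /\ b i ^+ q = b i)
    (hs : forall i, (0 < s i)%N /\ (s i * q = s i %[mod q ^ 2 - 1])%N) :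
  is_involution_poly (inv_poly q b s delta).
Proof.
have h2 : (2%N \in [pchar F]).
  apply: (@card_finPcharP F 2 (m * 2)) => //.
  by rewrite hF hq -expnM.
have hnat : [pchar F].-nat q.
  by rewrite (eq_pnat _ (pcharf_eq h2)) hq pnatX pnat_id.
have q0 : (0 < q)%N by rewrite hq expn_gt0.
have Fq2 : forall x : F, x ^+ (q ^ 2) = x by move=> x; rewrite -hF expf_card.
pose y (c : F) := c ^+ q + c + delta.
pose S (c : F) := \sum_(i < k) b i * y c ^+ s i.
have evP : forall c, (inv_poly q b s delta).[c] = S c + c.
  move=> c; rewrite /inv_poly hornerD hornerX horner_sum; congr (_ + _).
  apply: eq_bigr => i _; rewrite hornerZ.
  by rewrite !hornerE.
have Sq : forall c, S c ^+ q = S c.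
  move=> c; rewrite /S; apply: (big_ind (fun z : F => z ^+ q = z)).
  - by rewrite expr0n eqn0Ngt q0.
  - by move=> u v hu hv; rewrite exprDn_pchar // hu hv.
  move=> i _; rewrite exprMn (proj2 (hb i)) -exprM; congr (_ * _).
  have [si0 hmod] := hs i.
  have [->|yn0] := eqVneq (y c) 0.
    by rewrite !expr0n muln_eq0 !eqn0Ngt si0 q0.
  have h1 : y c ^+ (q ^ 2 - 1) = 1.
    have qq : (0 < q ^ 2)%N by rewrite expn_gt0 q0.
    apply: (mulIf yn0); rewrite mul1r -exprSr subn1 prednK //.
  by rewrite -(expr_mod _ h1) -hmod expr_mod.
have yP : forall c, y (S c + c) = y c.
  move=> c; rewrite /y exprDn_pchar // Sq.
  congr (_ + _); rewrite addrACA addrr_pchar2 ?add0r //.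
have inv : forall c, (inv_poly q b s delta).[(inv_poly q b s delta).[c]] = c.
  move=> c; rewrite !evP.
  have -> : S (S c + c) = S c by rewrite /S; apply: eq_bigr => i _; rewrite yP.
  exact: addKr_pchar2.
split => //; exists (fun c => (inv_poly q b s delta).[c]) => c; exact: inv.
Qed.
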